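(* Let $n,j,k,s\geq 1$. If $\mathsf{RT}^n_k\leq_{\mathrm{sW}}\mathsf{RT}^n_j$, then $\mathsf{RT}^n_{k^s}\leq_{\mathrm{sW}}\mathsf{RT}^n_{j^s}$.
   Context: For $n,k\geq1$, $\mathsf{RT}^n_k$ is the problem whose instances are colorings $f:[\omega]^n\to k$ and whose solutions are infinite sets $H$ with $f$ constant on $[H]^n$. $\mathsf{P}\leq_{\mathrm{sW}}\mathsf{Q}$ means there are Turing functionals $\Phi,\Psi$ such that for every instance $A$ of $\mathsf{P}$, $\Phi(A)$ is an instance of $\mathsf{Q}$, and for every solution $T$ to $\Phi(A)$, $\Psi(T)$ is a solution to $A$. *)

(* Defs.v *)
From mathcomp Require Import all_boot.
Set Implicit Arguments. Unset Strict Implicit. Unset Printing Implicit Defensive.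

(* Oracle partial recursive (mu-recursive) programs.  Argument lists are
   arity-free with default 0.  [POracle] queries the oracle on its first
   argument. *)
Inductive prog : Type :=
| PZero
| PSucc
| PProj of nat
| POracle
| PComp of prog & seq prog
| PPrim of prog & prog
| PMu of prog.

Inductive eval (A : nat -> nat) : prog -> seq nat -> nat -> Prop :=
| eZero args : eval A PZero args 0
| eSucc args : eval A PSucc args (head 0 args).+1
| eProj i args : eval A (PProj i) args (nth 0 args i)
| eOracle args : eval A POracle args (A (head 0 args))
| eComp g hs args ys y :
    evals A hs args ys -> eval A g ys y -> eval A (PComp g hs) args y
| ePrim0 b s rest y :
    eval A b rest y -> eval A (PPrim b s) (0 :: rest) y
| ePrimS b s x rest z y :
    eval A (PPrim b s) (x :: rest) z -> eval A s (x :: z :: rest) y ->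
    eval A (PPrim b s) (x.+1 :: rest) y
| eMu p args y :
    eval A p (y :: args) 0 ->
    (forall z, z < y -> exists v, v <> 0 /\ eval A p (z :: args) v) ->
    eval A (PMu p) args y
with evals (A : nat -> nat) : seq prog -> seq nat -> seq nat -> Prop :=
| esNil args : evals A [::] args [::]
| esCons h hs args y ys :
    eval A h args y -> evals A hs args ys -> evals A (h :: hs) args (y :: ys).

Definition computes (Phi : prog) (A B : nat -> nat) : Prop :=
  forall x, eval A Phi [:: x] (B x).

Record problem : Type := Problem {
  instance : (nat -> nat) -> Prop;
  solution : (nat -> nat) -> (nat -> nat) -> Prop (* solution A T *)
}.

Definition sW_le (P Q : problem) : Prop :=
  exists Phi Psi : prog,
    forall A, instance P A ->
      exists B, computes Phi A B /\ instance Q B /\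
        forall T, solution Q B T ->
          exists H, computes Psi T H /\ solution P A H.

(* Finite sets of naturals are coded canonically: code {x1,...,xm} = sum 2^xi.
   An element of [omega]^n is a strictly increasing list of length n. *)
Definition fcode (s : seq nat) : nat := \sum_(x <- s) 2 ^ x.

Definition nsubset (n : nat) (s : seq nat) : bool :=
  sorted ltn s && (size s == n).

(* A coloring f : [omega]^n -> k is named by c : nat -> nat with all values
   < k, where f(F) = c (fcode F). *)
Definition RT_instance (n k : nat) (c : nat -> nat) : Prop :=
  forall x, c x < k.

Definition set_name (h : nat -> nat) : Prop := forall x, h x <= 1.
Definition in_set (h : nat -> nat) (x : nat) : Prop := h x = 1.
Definition infinite_set (h : nat -> nat) : Prop :=
  forall m, exists x, m <= x /\ in_set h x.

Definition RT_solution (n : nat) (c h : nat -> nat) : Prop :=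
  set_name h /\ infinite_set h /\
  exists col : nat, forall s : seq nat,
    nsubset n s -> (forall x, x \in s -> in_set h x) -> c (fcode s) = col.

Definition RT (n k : nat) : problem :=
  Problem (RT_instance n k) (RT_solution n).

(* Main.v *)
Require Import Defs.
From mathcomp Require Import all_boot zify.
From Stdlib Require Import ClassicalEpsilon.
Set Implicit Arguments. Unset Strict Implicit.
Fixpoint eval_det A p args y (H : eval A p args y) {struct H} :
  forall y', eval A p args y' -> y = y'
with evals_det A hs args ys (H : evals A hs args ys) {struct H} :
  forall ys', evals A hs args ys' -> ys = ys'.
Proof.
- case: H.
  + by move=> a1 y1 H'; inversion H'.
  + by move=> a1 y1 H'; inversion H'.
  + by move=> i1 a1 y1 H'; inversion H'.
  + by move=> a1 y1 H'; inversion H'.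
  + move=> g1 hs1 a1 ys1 y1 Hs Hg y2 H'; inversion H'; subst.
    have E := evals_det _ _ _ _ Hs _ ltac:(eassumption); subst.
    exact: eval_det _ _ _ _ Hg _ ltac:(eassumption).
  + move=> b1 s1 rest1 y1 Hb y2 H'; inversion H'; subst.
    exact: eval_det _ _ _ _ Hb _ ltac:(eassumption).
  + move=> b1 s1 x1 rest1 z1 y1 Hp Hs y2 H'; inversion H'; subst.
    have E := eval_det _ _ _ _ Hp _ ltac:(eassumption); subst.
    exact: eval_det _ _ _ _ Hs _ ltac:(eassumption).
  + move=> p1 a1 y1 H0 H1 y2 H'; inversion H' as [| | | | | | | p2 a2 y3 H5 H4]; subst.
    case: (ltngtP y1 y2) => lt; last by [].
    * case: (H4 _ lt) => v [nv ev].
      have E := eval_det _ _ _ _ H0 _ ev; by rewrite -E in nv.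
    * case: (H1 _ lt) => v [nv ev].
      have E := eval_det _ _ _ _ ev _ H5; by rewrite E in nv.
- case: H.
  + by move=> a1 ys1 H'; inversion H'.
  + move=> h1 hs1 a1 y1 ys1 Hh Hs ys2 H'; inversion H'; subst.
    have E1 := eval_det _ _ _ _ Hh _ ltac:(eassumption).
    have E2 := evals_det _ _ _ _ Hs _ ltac:(eassumption).
    by subst.
Qed.
Fixpoint osub (Q : prog) (p : prog) : prog :=
  match p with
  | POracle => Q
  | PComp g hs => PComp (osub Q g) (map (osub Q) hs)
  | PPrim b s => PPrim (osub Q b) (osub Q s)
  | PMu p => PMu (osub Q p)
  | _ => p
  end.

Fixpoint osub_eval A A' Q (hQ : forall args, eval A Q args (A' (head 0 args)))
  p args y (H : eval A' p args y) {struct H} : eval A (osub Q p) args y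
with osubs_eval A A' Q (hQ : forall args, eval A Q args (A' (head 0 args)))
  hs args ys (H : evals A' hs args ys) {struct H} :
  evals A (map (osub Q) hs) args ys.
Proof.
- case: H => /=.
  + by move=> a; constructor.
  + by move=> a; constructor.
  + by move=> i a; constructor.
  + by move=> a; apply: hQ.
  + move=> g1 hs1 a1 ys1 y1 Hs Hg; econstructor.
    * exact: osubs_eval _ _ _ hQ _ _ _ Hs.
    * exact: osub_eval _ _ _ hQ _ _ _ Hg.
  + move=> b1 s1 r1 y1 Hb; constructor; exact: osub_eval _ _ _ hQ _ _ _ Hb.
  + move=> b1 s1 x1 r1 z1 y1 Hp Hs; econstructor.
    * exact: (osub_eval _ _ _ hQ _ _ _ Hp).
    * exact: osub_eval _ _ _ hQ _ _ _ Hs.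
  + move=> p1 a1 y1 H0 H1; constructor.
    * exact: osub_eval _ _ _ hQ _ _ _ H0.
    * move=> z lt; case: (H1 z lt) => v [nv ev]; exists v; split => //.
      exact: osub_eval _ _ _ hQ _ _ _ ev.
- case: H => /=.
  + by move=> a; constructor.
  + move=> h1 hs1 a1 y1 ys1 Hh Hs; constructor.
    * exact: osub_eval _ _ _ hQ _ _ _ Hh.
    * exact: osubs_eval _ _ _ hQ _ _ _ Hs.
Qed.
Definition un g p := PComp g [:: p].
Definition bin g p1 p2 := PComp g [:: p1; p2].

Lemma un_eval A g p args a y : eval A p args a -> eval A g [:: a] y -> eval A (un g p) args y.
Proof. by move=> H1 H2; econstructor; [constructor; [exact H1|constructor]|exact H2]. Qed.

Lemma bin_eval A g p1 p2 args a b y : eval A p1 args a -> eval A p2 args b ->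
  eval A g [:: a; b] y -> eval A (bin g p1 p2) args y.
Proof.
by move=> H1 H2 H3; econstructor; [constructor; [exact H1|constructor; [exact H2|constructor]]|exact H3].
Qed.

Definition cst m := iter m (fun p => un PSucc p) PZero.
Lemma cst_eval A m args : eval A (cst m) args m.
Proof.
elim: m => [|m IH] /=; first constructor.
by apply: un_eval IH _; constructor.
Qed.

Lemma proj_eval A i args : eval A (PProj i) args (nth 0 args i).
Proof. constructor. Qed.

Definition addp := PPrim (PProj 0) (un PSucc (PProj 1)).
Lemma add_eval A x y rest : eval A addp (x :: y :: rest) (x + y).
Proof.
elim: x => [|x IH]; first by apply: ePrim0; apply: proj_eval.
apply: ePrimS; first exact: IH.
by apply: un_eval; [apply: proj_eval|constructor].
Qed.

Definition mulp := PPrim PZero (bin addp (PProj 1) (PProj 2)).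
Lemma mul_eval A x y rest : eval A mulp (x :: y :: rest) (x * y).
Proof.
elim: x => [|x IH]; first by apply: ePrim0; constructor.
apply: ePrimS; first exact: IH.
rewrite mulSn addnC.
by apply: bin_eval; [apply: proj_eval|apply: proj_eval|apply: add_eval].
Qed.

Definition predp := PPrim PZero (PProj 0).
Lemma pred_eval A x rest : eval A predp (x :: rest) x.-1.
Proof.
elim: x => [|x IH]; first by apply: (@ePrim0 _ _ _ _ 0); constructor.
apply: ePrimS; first exact: IH.
exact: proj_eval.
Qed.

Definition subr := PPrim (PProj 0) (un predp (PProj 1)).
Lemma subr_eval A x y rest : eval A subr (y :: x :: rest) (x - y).
Proof.
elim: y => [|y IH]; first by rewrite subn0; apply: ePrim0; apply: proj_eval.
apply: ePrimS; first exact: IH.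
rewrite subnS.
by apply: un_eval; [apply: proj_eval|apply: pred_eval].
Qed.

Definition subp := bin subr (PProj 1) (PProj 0).
Lemma sub_eval A x y rest : eval A subp (x :: y :: rest) (x - y).
Proof.
by apply: bin_eval; [apply: proj_eval|apply: proj_eval|apply: subr_eval].
Qed.

Definition divp m :=
  PMu (bin subp (un PSucc (PProj 1)) (bin mulp (un PSucc (PProj 0)) (cst m))).

Lemma divtest_eval A m q v rest :
  eval A (bin subp (un PSucc (PProj 1)) (bin mulp (un PSucc (PProj 0)) (cst m)))
    (q :: v :: rest) (v.+1 - q.+1 * m).
Proof.
apply: bin_eval; last exact: sub_eval.
  by apply: un_eval; [apply: proj_eval|constructor].
apply: bin_eval; last exact: mul_eval.
  by apply: un_eval; [apply: proj_eval|constructor].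
exact: cst_eval.
Qed.

Lemma div_eval A m v rest : 0 < m -> eval A (divp m) (v :: rest) (v %/ m).
Proof.
move=> m0; constructor.
  have := divtest_eval A m (v %/ m) v rest.
  suff -> : v.+1 - (v %/ m).+1 * m = 0 by [].
  by apply/eqP; rewrite subn_eq0 ltn_ceil.
move=> z lt; exists (v.+1 - z.+1 * m); split; last exact: divtest_eval.
have : z.+1 * m <= v by rewrite -leq_divRL.
lia.
Qed.

Definition modp m := bin subp (PProj 0) (bin mulp (divp m) (cst m)).
Lemma mod_eval A m v rest : 0 < m -> eval A (modp m) (v :: rest) (v %% m).
Proof.
move=> m0; apply: bin_eval; [apply: proj_eval| |].
  apply: bin_eval; [exact: div_eval|exact: cst_eval|exact: mul_eval].
have E := divn_eq v m.
have -> : v %% m = v - v %/ m * m by lia.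
exact: sub_eval.
Qed.

Definition digit b i v := v %/ b ^ i %% b.
Definition digitp b i := un (modp b) (divp (b ^ i)).
Lemma digit_eval A b i v rest : 0 < b -> eval A (digitp b i) (v :: rest) (digit b i v).
Proof.
move=> b0; apply: un_eval; first by apply: div_eval; rewrite expn_gt0 b0.
exact: mod_eval.
Qed.
Definition enc (d : nat -> nat) s b := \sum_(i < s) d i * b ^ i.

Lemma encS d s b : enc d s.+1 b = d 0 + b * enc (fun i => d i.+1) s b.
Proof.
rewrite /enc big_ord_recl /= expn0 muln1 big_distrr /=; congr (_ + _).
by apply: eq_bigr => i _; rewrite expnS mulnCA.
Qed.

Lemma digitS b i v : digit b i.+1 v = digit b i (v %/ b).
Proof. by rewrite /digit expnS divnMA. Qed.

Lemma enc_lt d s b : 0 < b -> (forall i, i < s -> d i < b) -> enc d s b < b ^ s.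
Proof.
move=> b0; elim: s d => [|s IH] d hd; first by rewrite /enc big_ord0.
rewrite encS expnS.
have h0 := hd 0 (ltn0Sn _).
have h1 := IH (fun i => d i.+1) (fun i hi => hd i.+1 hi).
move: h0 h1; set E := enc _ _ _; set P := b ^ s; nia.
Qed.

Lemma enc_digit d s b : 0 < b -> (forall i, i < s -> d i < b) ->
  forall m, m < s -> digit b m (enc d s b) = d m.
Proof.
move=> b0; elim: s d => [|s IH] d hd m //; rewrite encS.
have h0 := hd 0 (ltn0Sn _).
case: m => [|m] hm.
  by rewrite /digit expn0 divn1 addnC mulnC modnMDl modn_small.
rewrite digitS addnC mulnC divnMDl // divn_small // addn0.
exact: (IH (fun i => d i.+1) (fun i hi => hd i.+1 hi)).
Qed.

Lemma digit_enc v s b : 0 < b -> v < b ^ s -> v = enc (fun i => digit b i v) s b.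
Proof.
move=> b0; elim: s v => [|s IH] v hv.
  by rewrite /enc big_ord0; move: hv; rewrite expn0; case: v.
have hq : v %/ b < b ^ s by rewrite ltn_divLR // mulnC -expnS.
rewrite encS {1}(divn_eq v b) (IH _ hq) /digit expn0 divn1 addnC mulnC; congr (_ + _ * _).
by apply: eq_bigr => i _; rewrite -/(digit b i.+1 v) digitS.
Qed.

Definition Qp k i := un (digitp k i) POracle.
Lemma Q_eval A k i args : 0 < k -> eval A (Qp k i) args (digit k i (A (head 0 args))).
Proof. move=> k0; apply: un_eval; [constructor|exact: digit_eval]. Qed.

Fixpoint sump Phi k j m : prog :=
  match m with
  | 0 => PZero
  | m.+1 => bin addp (sump Phi k j m) (bin mulp (osub (Qp k m) Phi) (cst (j ^ m)))
  end.

Lemma sump_eval A Phi k j (B : nat -> nat -> nat) x :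
  (forall i, eval A (osub (Qp k i) Phi) [:: x] (B i x)) ->
  forall m, eval A (sump Phi k j m) [:: x] (enc (fun i => B i x) m j).
Proof.
move=> hB; elim => [|m IH] /=; first by rewrite /enc big_ord0; constructor.
rewrite /enc big_ord_recr /= -/(enc _ m j).
apply: bin_eval; [exact: IH| |exact: add_eval].
apply: bin_eval; [exact: hB|exact: cst_eval|exact: mul_eval].
Qed.

Theorem lemma3p5 (n j k s : nat) :
  0 < n -> 0 < j -> 0 < k -> 0 < s ->
  sW_le (RT n k) (RT n j) -> sW_le (RT n (k ^ s)) (RT n (j ^ s)).
Proof.
move=> n0 j0 k0 s0 [Phi [Psi Hred]].
exists (sump Phi k j s), Psi => c Hc.
have Hci : forall i, RT_instance n k (fun x => digit k i (c x)).
  by move=> i x; rewrite /digit ltn_pmod.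
have [Bf HB] := choice _ (fun i => Hred _ (Hci i)).
exists (fun x => enc (fun i => Bf i x) s j); split; [|split].
- move=> x; apply: sump_eval => i.
  apply: (osub_eval (A' := fun y => digit k i (c y))); last exact: (HB i).1.
  by move=> args; apply: Q_eval.
- move=> x; apply: enc_lt => // i _; exact: (HB i).2.1.
- move=> T [Tn [Tinf [col Hcol]]].
  have HTi : forall i, i < s -> RT_solution n (Bf i) T.
    move=> i hi; split => //; split => //; exists (digit j i col) => s' h1 h2.
    rewrite -(Hcol s' h1 h2) enc_digit //.
    by move=> i' _; exact: (HB i').2.1.
  have [Hf HHf] : exists Hf : nat -> nat -> nat, forall i, i < s ->
      computes Psi T (Hf i) /\ RT_solution n (fun x => digit k i (c x)) (Hf i).
    apply: (choice (fun i H => i < s -> computes Psi T H /\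
       RT_solution n (fun x => digit k i (c x)) H)) => i.
    case: (ltnP i s) => hi; last by exists (fun _ => 0) => h; exfalso; lia.
    have [H [h1 h2]] := (HB i).2.2 T (HTi i hi); by exists H.
  have Heq : forall i, i < s -> forall x, Hf i x = Hf 0 x.
    move=> i hi x; apply: (eval_det ((HHf i hi).1 x)); exact: (HHf 0 s0).1.
  exists (Hf 0); split; first exact: (HHf 0 s0).1.
  have [H0n [H0inf _]] := (HHf 0 s0).2.
  split => //; split => //.
  have [colf Hcolf] : exists colf : nat -> nat, forall i, i < s -> forall s',
      nsubset n s' -> (forall x, x \in s' -> Defs.in_set (Hf 0) x) ->
      digit k i (c (fcode s')) = colf i.
    apply: (choice (fun i col => i < s -> forall s',
      nsubset n s' -> (forall x, x \in s' -> Defs.in_set (Hf 0) x) ->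
      digit k i (c (fcode s')) = col)) => i.
    case: (ltnP i s) => hi; last by exists 0 => h; exfalso; lia.
    have [_ [_ [coli Hi]]] := (HHf i hi).2.
    exists coli => _ s' h1 h2; apply: Hi => // x hx.
    by rewrite /Defs.in_set Heq //; apply: h2.
  exists (enc colf s k) => s' h1 h2.
  rewrite [LHS](digit_enc k0 (Hc _)); apply: eq_bigr => i _.
  by rewrite (Hcolf i (ltn_ord i) s' h1 h2).
Qed.
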